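(* Let $G$ be a cyclically $4$-edge-connected cubic graph and let $e_1=ab$ and $e_2=cd$ be two independent (non-adjacent) edges of $G$. Let $t\ge 2$ and let $H$ be the cubic graph obtained from $t$ copies of $G-e_1-e_2$ by joining them cyclically. Then $H$ is cyclically $4$-edge-connected.
   Context: Graphs are finite, undirected, loopless, and may contain parallel edges. A cubic graph is cyclically $4$-edge-connected if it has no edge cut of size less than $4$ whose removal leaves at least two components each containing a cycle. Joining cyclically: take $t$ copies of $G-e_1-e_2$, and denote by $a_i,b_i,c_i,d_i$ the vertices corresponding to $a,b,c,d$ in the $i$-th copy; for $i=1,\dots,t-1$ add the edges $d_ia_{i+1}$ and $c_ib_{i+1}$, and add the edges $d_ta_1$ and $c_tb_1$. The resulting graph is cubic. *)

(* Defs.v *)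
From mathcomp Require Import all_boot.
Set Implicit Arguments. Unset Strict Implicit. Unset Printing Implicit Defensive.

Section Multigraph.
Variables (V E : finType) (src tgt : E -> V).

Definition loopless : Prop := forall e, src e != tgt e.

Definition incident (e : E) (v : V) : bool := (src e == v) || (tgt e == v).

(* every vertex is incident with exactly three edges (no loops) *)
Definition cubic : Prop := forall v, #|[set e | incident e v]| = 3.

Definition adj_minus (S : {set E}) : rel V := fun x y =>
  [exists e, (e \notin S) &&
     (((src e == x) && (tgt e == y)) || ((src e == y) && (tgt e == x)))].

(* the component of u in G - S contains a cycle: a nonempty edge set F of
   G - S inside that component in which every vertex has degree 0 or 2 *)
Definition comp_has_cycle (S : {set E}) (u : V) : Prop :=
  exists F : {set E},
    [/\ F != set0, [disjoint F & S],
        (forall e, e \in F -> connect (adj_minus S) u (src e)) &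
        (forall v, #|[set e in F | incident e v]| \in [:: 0; 2])].

Definition cyc4ec : Prop :=
  forall S : {set E}, #|S| < 4 ->
    ~ (exists u v : V, [/\ ~~ connect (adj_minus S) u v,
                           comp_has_cycle S u & comp_has_cycle S v]).
End Multigraph.

(* Vertices: V * 'I_t,
   (x, i) is the copy of x in the i-th copy.  Edges: copies of the edges
   of G other than e1, e2, plus for each i the edges d_i a_{i+1}
   (tag false) and c_i b_{i+1} (tag true), indices taken cyclically. *)
Definition join_E (E : finType) (e1 e2 : E) (t : nat) : finType :=
  ({e : E | (e != e1) && (e != e2)} * 'I_t + 'I_t * bool)%type.

Section Join.
Variables (V E : finType) (src tgt : E -> V) (e1 e2 : E) (a b c d : V) (t : nat).

Definition join_ends (x : join_E e1 e2 t) : (V * 'I_t) * (V * 'I_t) :=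
  match x with
  | inl (e, i) => ((src (val e), i), (tgt (val e), i))
  | inr (i, false) => ((d, i), (a, ordS i))
  | inr (i, true) => ((c, i), (b, ordS i))
  end.

Definition join_src (x : join_E e1 e2 t) : V * 'I_t := (join_ends x).1.
Definition join_tgt (x : join_E e1 e2 t) : V * 'I_t := (join_ends x).2.
End Join.

(* Main.v *)
From mathcomp Require Import all_boot zify.
Require Import Defs.
Set Implicit Arguments. Unset Strict Implicit. Unset Printing Implicit Defensive.

Lemma val_iter n (x : 'I_n) m : val (iter m (@ordS n) x) = (x + m) %% n.
Proof.
elim: m => [|m IH] /=; first by rewrite addn0 modn_small.
by rewrite -addn1 IH modnDml addn1 addnS.
Qed.

Lemma mod_ne k m n : k < n -> m.+1 < n -> (k.+1 + m) %% n != k.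
Proof.
move=> Hk Hm; apply/negP => /eqP Hmod.
have : (k + m.+1 == k + 0 %[mod n]) by rewrite addn0 (modn_small Hk) -{2}Hmod addSn addnS.
rewrite eqn_modDl mod0n modn_small //; lia.
Qed.

Lemma cycB n (f : 'I_n -> bool) k0 : (forall k, k != k0 -> f k = f (ordS k)) ->
  forall j, f j = f (ordS k0).
Proof.
move=> H j.
have Hk0 := ltn_ord k0.
have Hne : forall m, m.+1 < n -> iter m (@ordS n) (ordS k0) != k0.
  move=> m Hm; apply/negP => /eqP /(congr1 val); rewrite val_iter /= modnDml.
  by apply/eqP; apply: mod_ne.
have Hit : forall m, m < n -> f (iter m (@ordS n) (ordS k0)) = f (ordS k0).
  elim => [//|m IH] Hm /=; rewrite -H ?IH //; [lia | apply: Hne; lia].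
have Hj := ltn_ord j.
case: (leqP (k0.+1) j) => Hjk.
  have -> : j = iter (j - k0.+1) (@ordS n) (ordS k0).
    apply: val_inj; rewrite val_iter /= modnDml.
    have -> : k0.+1 + (j - k0.+1) = j by lia.
    by rewrite modn_small.
  apply: Hit; lia.
have -> : j = iter (j + n - k0.+1) (@ordS n) (ordS k0).
  apply: val_inj; rewrite val_iter /= modnDml.
  have -> : k0.+1 + (j + n - k0.+1) = j + n by lia.
  by rewrite modnDr modn_small.
apply: Hit; lia.
Qed.

Lemma ordS_neq n (i : 'I_n) : 1 < n -> ordS i != i.
Proof.
move=> Hn; apply/negP => /eqP /(congr1 val) /=.
have Hi := ltn_ord i; case: (ltnP i.+1 n) => Hi1.
  rewrite modn_small //; lia.
have -> : i.+1 = n by lia.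
rewrite modnn; lia.
Qed.

Lemma cycB' n (f : 'I_n -> bool) i : 1 < n ->
  (forall k, k != i -> ordS k != i -> f k = f (ordS k)) ->
  forall j, j != i -> f j = f (ordS i).
Proof.
move=> Hn H.
set g := fun j => if j == i then f (ordS i) else f j.
have Hg : forall k, k != ord_pred i -> g k = g (ordS k).
  move=> k Hk; rewrite /g; case: (k =P i) => [->|Hki].
    by rewrite (negbTE (ordS_neq i Hn)).
  case: (ordS k =P i) => [Hs|Hs].
    by move: Hk; rewrite -Hs ordSK eqxx.
  by apply: H; apply/eqP.
move=> j Hj; have := cycB Hg j; rewrite ord_predK /g (negbTE Hj) eqxx //.
Qed.
Set Implicit Arguments. Unset Strict Implicit. Unset Printing Implicit Defensive.

Lemma sumb (T : finType) (A : {pred T}) (P : pred T) :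
  \sum_(x in A) (P x : nat) = #|[set x in A | P x]|.
Proof.
rewrite -sum1_card [RHS]big_mkcond [LHS]big_mkcond /=; apply: eq_bigr => x _.
by rewrite !inE; case: (x \in A); case: (P x).
Qed.

Lemma sum_eq1 (T : finType) (Y : {pred T}) (y : T) :
  \sum_(x in Y) (y == x : nat) = (y \in Y).
Proof.
rewrite sumb; case: (boolP (y \in Y)) => Hy.
  have -> : [set x in Y | y == x] = [set y].
    apply/setP => x; rewrite !inE; case: (y =P x) => [<-|H]; first by rewrite Hy eqxx.
    by rewrite andbF; apply/esym/eqP => Exy; apply: H.
  by rewrite cards1.
have -> : [set x in Y | y == x] = set0.
  apply/setP => x; rewrite !inE; case: (y =P x) => [Exy|]; last by rewrite andbF.
  by subst x; rewrite (negbTE Hy).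
by rewrite cards0.
Qed.

Section GPart.
Variables (V E : finType) (src tgt : E -> V).
Hypothesis Hloop : loopless src tgt.

Definition deg (F : {set E}) x := #|[set e in F | incident src tgt e x]|.
Definition Pdeg F := forall x, deg F x != 1.
Definition touched (F : {set E}) := [set x | [exists e in F, incident src tgt e x]].
Definition cutG (Y : {set V}) := [set e | (src e \in Y) != (tgt e \in Y)].
Definition inner (Y : {set V}) := [set e | (src e \in Y) && (tgt e \in Y)].

Lemma hs (Y : {set V}) (F : {set E}) :
  \sum_(x in Y) deg F x = \sum_(e in F) ((src e \in Y) + (tgt e \in Y)).
Proof.
under eq_bigr do rewrite /deg -sumb.
rewrite exchange_big /=; apply: eq_bigr => e _.
have -> : \sum_(x in Y) (incident src tgt e x : nat) =
          \sum_(x in Y) ((src e == x) + (tgt e == x)).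
  apply: eq_bigr => x _; rewrite /incident.
  have := Hloop e; case: (src e =P x) => [Hs|Hs]; case: (tgt e =P x) => [Ht|Ht] //=.
  by rewrite Hs Ht eqxx.
by rewrite big_split /= !sum_eq1.
Qed.

Lemma degD (F : {set E}) e x : e \in F ->
  deg F x = incident src tgt e x + deg (F :\ e) x.
Proof.
move=> He; rewrite /deg (cardsD1 e [set e0 in F | _]) !inE He /=; congr (_ + _).
by apply: eq_card => f; rewrite !inE andbA.
Qed.

Lemma deg_touched F x : x \in touched F -> 0 < deg F x.
Proof.
rewrite inE => /existsP [e /andP [He Hi]]; apply/card_gt0P; exists e.
by rewrite inE He.
Qed.

Lemma core_count (K : {set E}) : (forall K' : {set E}, K' \subset K -> K' != set0 -> ~ Pdeg K') ->
  K != set0 -> #|K| < #|touched K|.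
Proof.
have [n Hn] : exists n, #|K| <= n by exists #|K|.
elim: n K Hn => [|n IH] K Hn Hcore HK.
  by move: HK; rewrite -card_gt0; lia.
have [x Hx] : exists x, deg K x = 1.
  case: (pickP (fun x => deg K x == 1)) => [x /eqP Hx | H]; first by exists x.
  by exfalso; apply: (Hcore K (subxx K) HK) => y; rewrite H.
have /cards1P [f Hf] : #|[set e in K | incident src tgt e x]| == 1 by rewrite -/(deg K x) Hx.
have : f \in [set e in K | incident src tgt e x] by rewrite Hf set11.
rewrite inE => /andP [HfK Hfx].
have HKf := cardsD1 f K; rewrite HfK in HKf.
have xT : x \in touched K by rewrite inE; apply/existsP; exists f; rewrite HfK.
case: (boolP (K :\ f == set0)) => [/eqP H0 | H0].
  rewrite HKf H0 cards0; apply/card_gt1P; exists (src f), (tgt f); split.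
  - by rewrite inE; apply/existsP; exists f; rewrite HfK /incident eqxx.
  - by rewrite inE; apply/existsP; exists f; rewrite HfK /incident eqxx orbT.
  - exact: Hloop.
have H1 : #|K :\ f| < #|touched (K :\ f)|.
  apply: IH => //; first by lia.
  move=> K' HK'; apply: Hcore; apply: subset_trans HK' _; exact: subsetDl.
have H2 : touched (K :\ f) \subset touched K :\ x.
  apply/subsetP => y; rewrite !inE => /existsP [e /andP [He Hy]].
  rewrite !inE in He; case/andP: He => Hef HeK.
  apply/andP; split; last by apply/existsP; exists e; rewrite HeK.
  apply/negP => /eqP Hyx; subst y.
  have : e \in [set e in K | incident src tgt e x] by rewrite inE HeK.
  by rewrite Hf inE (negbTE Hef).
have := subset_leq_card H2; rewrite (cardsD1 x (touched K)) xT; lia.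
Qed.


Definition cyc (F : {set E}) := (F != set0) /\ forall x, deg F x \in [:: 0; 2].

Lemma cycle_exists (F : {set E}) : F != set0 -> Pdeg F ->
  exists2 F' : {set E}, F' \subset F & cyc F'.
Proof.
have [n Hn] : exists n, #|F| <= n by exists #|F|.
elim: n F Hn => [|n IH] F Hn HF HP.
  by move: HF; rewrite -card_gt0; lia.
case: (pickP (fun x => deg F x \notin [:: 0; 2])) => [v Hv | Hall]; last first.
  exists F => //; split => // x; have := Hall x; by move/negbFE.
have Hv3 : 3 <= deg F v.
  move: Hv (HP v); rewrite !inE; case: (deg F v) => [|[|[|k]]] //.
have [e He] : exists e, e \in [set e in F | incident src tgt e v].
  by apply/card_gt0P; rewrite -/(deg F v); lia.
rewrite inE in He; case/andP: He => HeF Hev.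
set K := F :\ e.
have degK x : deg F x = incident src tgt e x + deg K x by apply: degD.
have HFK : #|F| = 1 + #|K| by rewrite (cardsD1 e F) HeF.
case: (boolP [exists K' : {set E}, [&& K' \subset K, K' != set0 & [forall x, deg K' x != 1]]]).
  case/existsP => K' /and3P [HK'K HK'0 /forallP HK'P].
  have [F' HF'1 HF'2] := IH K' ltac:(have := subset_leq_card HK'K; lia) HK'0 HK'P.
  exists F' => //; apply: subset_trans HF'1 _; apply: subset_trans HK'K _; exact: subsetDl.
move/existsPn => Hno.
have Hcore : forall K' : {set E}, K' \subset K -> K' != set0 -> ~ Pdeg K'.
  move=> K' H1 H2 H3; have := Hno K'; rewrite H1 H2 /=.
  by move/negP; apply; apply/forallP.
have HK0 : K != set0.
  apply/negP => /eqP HK; have := degK v; rewrite Hev /deg HK.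
  have -> : [set e0 in set0 | incident src tgt e0 v] = set0 by apply/setP => y; rewrite !inE.
  rewrite cards0 -/(deg F v); lia.
have Hc := core_count Hcore HK0.
set T := touched K in Hc.
have Hsum := hs T K.
have Hsum2 : \sum_(e0 in K) ((src e0 \in T) + (tgt e0 \in T)) = \sum_(e0 in K) 2.
  apply: eq_bigr => f Hf; rewrite !inE.
  have -> : [exists e0 in K, incident src tgt e0 (src f)].
    by apply/existsP; exists f; rewrite Hf /incident eqxx.
  have -> : [exists e0 in K, incident src tgt e0 (tgt f)].
    by apply/existsP; exists f; rewrite Hf /incident eqxx orbT.
  by [].
rewrite Hsum2 sum_nat_const in Hsum.
set w := if src e == v then tgt e else src e.
have Hlow : forall x, x \in T -> 2 <= deg K x + (w == x).
  move=> x xT; have := deg_touched xT; rewrite -/T.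
  case: (w =P x) => [//|Hwx] Hpos; first by lia.
  case: (v =P x) => [<-|Hvx].
    by have := degK v; rewrite Hev; lia.
  have Hnx : incident src tgt e x = false.
    apply/negP => Hix; move: Hev Hix Hwx; rewrite /incident /w.
    case: (src e =P v) => Hs; case: (src e =P x) => Hsx; case: (tgt e =P x) => Htx;
      case: (tgt e =P v) => Htv //= _ _; congruence.
  have := degK x; rewrite Hnx add0n => Hd.
  have := HP x; rewrite Hd; move: Hpos; case: (deg K x) => [|[|k]] //.
have Hsl : \sum_(x in T) 2 <= \sum_(x in T) (deg K x + (w == x)).
  by apply: leq_sum => x xT; apply: Hlow.
rewrite big_split /= sum_eq1 Hsum sum_nat_const in Hsl.
by move: Hsl; case: (w \in T) => /=; lia.
Qed.

Lemma sumb_setT (P : pred E) : \sum_(e in [set: E]) (P e : nat) = #|[set e | P e]|.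
Proof. by rewrite sumb; apply: eq_card => e; rewrite !inE. Qed.

Hypothesis Hcub : cubic src tgt.

Lemma cut_inner_count (Y : {set V}) : 3 * #|Y| = 2 * #|inner Y| + #|cutG Y|.
Proof.
have H1 : \sum_(x in Y) deg [set: E] x = 3 * #|Y|.
  rewrite -[in RHS]sum1_card big_distrr /=; apply: eq_bigr => x _.
  rewrite /deg -(Hcub x) muln1; apply: eq_card => e; rewrite !inE //.
rewrite -H1 hs.
have -> : \sum_(e in [set: E]) ((src e \in Y) + (tgt e \in Y)) =
          \sum_(e in [set: E]) (2 * ((src e \in Y) && (tgt e \in Y)) + ((src e \in Y) != (tgt e \in Y))).
  by apply: eq_bigr => e _; case: (src e \in Y); case: (tgt e \in Y).
by rewrite big_split /= -big_distrr /= !sumb_setT.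
Qed.

Lemma Cy (Y : {set V}) : #|cutG Y| <= 3 -> 1 < #|Y| ->
  exists2 F : {set E}, F \subset inner Y & cyc F.
Proof.
move=> Hcut HY.
case: (boolP [exists K' : {set E}, [&& K' \subset inner Y, K' != set0 & [forall x, deg K' x != 1]]]).
  case/existsP => K' /and3P [HK'K HK'0 /forallP HK'P].
  have [F' HF'1 HF'2] := cycle_exists HK'0 HK'P.
  by exists F' => //; apply: subset_trans HF'1 _.
move/existsPn => Hno.
have Hcore : forall K' : {set E}, K' \subset inner Y -> K' != set0 -> ~ Pdeg K'.
  move=> K' H1 H2 H3; have := Hno K'; rewrite H1 H2 /=.
  by move/negP; apply; apply/forallP.
have Hcnt := cut_inner_count Y.
have HtY : #|touched (inner Y)| <= #|Y|.
  apply: subset_leq_card; apply/subsetP => x; rewrite inE => /existsP [e /andP [He Hx]].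
  move: He; rewrite inE => /andP [Hs Ht]; move: Hx; rewrite /incident.
  by case/orP => /eqP <-.
case: (boolP (inner Y == set0)) => [/eqP H0 | H0].
  by move: Hcnt; rewrite H0 cards0; lia.
have := core_count Hcore H0; lia.
Qed.

Lemma adj_sym (S : {set E}) : symmetric (adj_minus src tgt S).
Proof.
move=> x y; apply/existsP/existsP => [] [e He]; exists e; move: He;
  by case/andP => -> /orP [] /andP [-> ->]; rewrite ?orbT.
Qed.

Lemma adj_edge (S : {set E}) e : e \notin S -> adj_minus src tgt S (src e) (tgt e).
Proof. by move=> He; apply/existsP; exists e; rewrite He !eqxx. Qed.

Lemma conn_edge (S : {set E}) e u : e \notin S ->
  connect (adj_minus src tgt S) u (src e) = connect (adj_minus src tgt S) u (tgt e).
Proof.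
move=> He; apply/idP/idP => H; apply: connect_trans H _; apply: connect1.
  exact: adj_edge.
by rewrite adj_sym; apply: adj_edge.
Qed.

Lemma restrict_cycle (S F : {set E}) e0 : cyc F -> [disjoint F & S] -> e0 \in F ->
  comp_has_cycle src tgt S (src e0).
Proof.
move=> [HF0 HFd] Hdis He0.
have HnS : forall e, e \in F -> e \notin S.
  by move=> e He; rewrite (disjointFr Hdis He).
set A := adj_minus src tgt S.
set F' := [set e in F | connect A (src e0) (src e)].
exists F'; split.
- by apply/set0Pn; exists e0; rewrite inE He0 connect0.
- apply: disjointWl Hdis; apply/subsetP => e; rewrite inE; by case/andP.
- by move=> e; rewrite inE => /andP [].
- move=> x.
  case: (boolP [exists f in F', incident src tgt f x]) => [/existsP [f /andP [HfF' Hfx]] | Hno].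
    have Hux : connect A (src e0) x.
      move: HfF'; rewrite inE => /andP [HfF Hc].
      move: Hfx; rewrite /incident => /orP [] /eqP <- //.
      by rewrite -conn_edge // HnS.
    have -> : [set e in F' | incident src tgt e x] = [set e in F | incident src tgt e x].
      apply/setP => g; rewrite !inE; case: (boolP (g \in F)) => HgF //=.
      case: (boolP (incident src tgt g x)) => Hgx; rewrite ?andbT ?andbF //.
      move: Hgx; rewrite /incident => /orP [] /eqP Hg; first by rewrite Hg Hux.
      by rewrite conn_edge ?HnS // Hg Hux.
    exact: HFd.
  have -> : [set e in F' | incident src tgt e x] = set0.
    apply/setP => g; rewrite [in LHS]inE in_set0; apply/negP => /andP [Hg1 Hg2].
    move/existsPn: Hno => /(_ g); by rewrite Hg1 Hg2.
  by rewrite cards0.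
Qed.

Lemma cutC (Y : {set V}) : cutG (~: Y) = cutG Y.
Proof. by apply/setP => e; rewrite !inE; case: (src e \in Y); case: (tgt e \in Y). Qed.

Hypothesis Hcyc : cyc4ec src tgt.

Lemma L3 (Y : {set V}) : #|cutG Y| <= 3 -> #|Y| <= 1 \/ #|~: Y| <= 1.
Proof.
move=> Hc; case: (leqP #|Y| 1) => HY; first by left.
case: (leqP #|~: Y| 1) => HY'; first by right.
exfalso.
have [F1 HF1 [HF10 HF1d]] := Cy Hc HY.
have Hc' : #|cutG (~: Y)| <= 3 by rewrite cutC.
have [F2 HF2 [HF20 HF2d]] := Cy Hc' HY'.
have /set0Pn [f1 Hf1] := HF10; have /set0Pn [f2 Hf2] := HF20.
have Hdis : forall (Z : {set V}) (F : {set E}), F \subset inner Z -> [disjoint F & cutG Z].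
  move=> Z F HF; rewrite disjoint_subset; apply/subsetP => e He.
  have := subsetP HF e He; rewrite !inE => /andP [-> ->] //.
apply: (Hcyc (S := cutG Y)); first by lia.
exists (src f1), (src f2); split.
- have Hcl : closed (adj_minus src tgt (cutG Y)) (mem Y).
    move=> x y /existsP [e /andP [He Hxy]]; move: He; rewrite !inE negbK => /eqP He.
    by case/orP: Hxy => /andP [/eqP <- /eqP <-].
  apply/negP => /(closed_connect Hcl).
  have := subsetP HF1 f1 Hf1; rewrite inE => /andP [-> _].
  have := subsetP HF2 f2 Hf2; rewrite !inE => /andP [/negbTE -> _] //.
- exact: (restrict_cycle (conj HF10 HF1d) (Hdis _ _ HF1) Hf1).
- by apply: (restrict_cycle (conj HF20 HF2d) _ Hf2); rewrite -cutC; apply: Hdis.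
Qed.

End GPart.
Section HPart.
Variables (V E : finType) (src tgt : E -> V) (e1 e2 : E) (a b c d : V) (t : nat).
Hypothesis Hloop : loopless src tgt.
Hypothesis Hcub : cubic src tgt.
Hypothesis Hcyc : cyc4ec src tgt.
Hypothesis He1 : (src e1 = a /\ tgt e1 = b) \/ (src e1 = b /\ tgt e1 = a).
Hypothesis He2 : (src e2 = c /\ tgt e2 = d) \/ (src e2 = d /\ tgt e2 = c).
Hypothesis Hu : uniq [:: a; b; c; d].
Hypothesis Ht : 2 <= t.

Definition subE := {e : E | (e != e1) && (e != e2)}.

Lemma inc_e1 x : incident src tgt e1 x -> (x == a) || (x == b).
Proof. by rewrite /incident; case: He1 => [[-> ->]|[-> ->]] /orP [] /eqP <-; rewrite eqxx ?orbT. Qed.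
Lemma inc_e2 x : incident src tgt e2 x -> (x == c) || (x == d).
Proof. by rewrite /incident; case: He2 => [[-> ->]|[-> ->]] /orP [] /eqP <-; rewrite eqxx ?orbT. Qed.

Lemma Hab : a != b. Proof. by move: Hu; rewrite /= !inE; case: (a == b). Qed.
Lemma Hac : a != c. Proof. by move: Hu; rewrite /= !inE; case: (a == c); rewrite ?orbT. Qed.
Lemma Had : a != d. Proof. by move: Hu; rewrite /= !inE; case: (a == d); rewrite ?orbT. Qed.
Lemma Hbc : b != c. Proof. by move: Hu; rewrite /= !inE; case: (b == c); rewrite ?orbT ?andbF. Qed.
Lemma Hbd : b != d. Proof. by move: Hu; rewrite /= !inE; case: (b == d); rewrite ?orbT ?andbF. Qed.
Lemma Hcd : c != d. Proof. by move: Hu; rewrite /= !inE; case: (c == d); rewrite ?orbT ?andbF. Qed.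

Lemma not_both x : incident src tgt e1 x -> incident src tgt e2 x -> False.
Proof.
move=> /inc_e1 /orP [] /eqP -> /inc_e2 /orP [] /eqP Hx.
- by move: Hac; rewrite Hx eqxx.
- by move: Had; rewrite Hx eqxx.
- by move: Hbc; rewrite Hx eqxx.
- by move: Hbd; rewrite Hx eqxx.
Qed.

Lemma setC_neq0 (T : finType) (Y : {set T}) : Y != setT -> ~: Y != set0.
Proof.
move=> HY; apply/negP => /eqP H; move/eqP: HY; apply.
apply/setP => x; have := congr1 (fun S : {set T} => x \in S) H.
by rewrite !inE; case: (x \in Y).
Qed.

Lemma F1 (Y : {set V}) : Y != set0 -> Y != setT ->
  exists x y : subE, [/\ x != y, val x \in cutG src tgt Y & val y \in cutG src tgt Y].
Proof.
move=> Y0 YT.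
suff H2 : 1 < #|cutG src tgt Y :\ e1 :\ e2|.
  case/card_gt1P: H2 => x [y [Hx Hy Hxy]]; rewrite !inE in Hx Hy.
  case/and3P: Hx => Hx2 Hx1 Hx; case/and3P: Hy => Hy2 Hy1 Hy.
  exists (Sub x (introT andP (conj Hx1 Hx2)) : subE), (Sub y (introT andP (conj Hy1 Hy2)) : subE).
  rewrite !SubK; split; [|by rewrite inE|by rewrite inE]; apply/negP => /eqP H; move/negP: Hxy; apply.
  by apply/eqP; have := congr1 val H; rewrite !SubK.
have Hc := cardsD1 e1 (cutG src tgt Y); have Hc2 := cardsD1 e2 (cutG src tgt Y :\ e1).
case: (leqP 4 #|cutG src tgt Y|) => Hcut.
  by move: Hc Hc2; case: (e1 \in _); case: (e2 \in _); lia.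
have [Z [HZc HZ0 HZ1]] : exists Z, [/\ cutG src tgt Z = cutG src tgt Y, Z != set0 & #|Z| <= 1].
  case: (L3 Hloop Hcub Hcyc (Y := Y) ltac:(lia)) => H.
    by exists Y.
  by exists (~: Y); split => //; [apply: cutC | apply: setC_neq0].
have /cards1P [x0 Hx0] : #|Z| == 1 by move: HZ0; rewrite -card_gt0; lia.
set B := [set e | incident src tgt e x0].
have HB : B \subset cutG src tgt Y.
  apply/subsetP => e; rewrite -HZc Hx0 !inE /incident.
  have := Hloop e; case: (src e =P x0) => Hs; case: (tgt e =P x0) => Ht' //=.
  by rewrite Hs Ht' eqxx.
have HB3 : #|B| = 3 by apply: Hcub.
have HBs : B :\ e1 :\ e2 \subset cutG src tgt Y :\ e1 :\ e2 by apply: setSD; apply: setSD.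
have := subset_leq_card HBs.
have Hb1 := cardsD1 e1 B; have Hb2 := cardsD1 e2 (B :\ e1).
have Hnb : ~~ ((e1 \in B) && (e2 \in B :\ e1)).
  by apply/negP; rewrite !inE => /and3P [H1 _ H2]; apply: (not_both H1 H2).
by move: Hb1 Hb2 Hnb; case: (e1 \in B); case: (e2 \in B :\ e1); lia.
Qed.


Definition JS := @join_src V E src tgt e1 e2 a b c d t.
Definition JT := @join_tgt V E src tgt e1 e2 a b c d t.
Definition HE := join_E e1 e2 t.
Definition cutH (Z : {set V * 'I_t}) := [set x : HE | (JS x \in Z) != (JT x \in Z)].
Definition sl (Z : {set V * 'I_t}) i := [set x | (x, i) \in Z].
Definition ntr (Y : {set V}) := (Y != set0) && (Y != setT).

Lemma crossL Z (e : subE) i : ((inl (e, i) : HE) \in cutH Z) = (val e \in cutG src tgt (sl Z i)).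
Proof. by rewrite !inE. Qed.
Lemma crossF Z k : ((inr (k, false) : HE) \in cutH Z) = ((d \in sl Z k) != (a \in sl Z (ordS k))).
Proof. by rewrite !inE. Qed.
Lemma crossT Z k : ((inr (k, true) : HE) \in cutH Z) = ((c \in sl Z k) != (b \in sl Z (ordS k))).
Proof. by rewrite !inE. Qed.

Lemma cutHC Z : cutH (~: Z) = cutH Z.
Proof. by apply/setP => x; rewrite !inE; case: (JS x \in Z); case: (JT x \in Z). Qed.
Lemma slC Z i : sl (~: Z) i = ~: sl Z i.
Proof. by apply/setP => x; rewrite !inE. Qed.

Lemma sum_eqE1 (A B : eqType) (x y : A) : ((inl x : A + B) == inl y) = (x == y).
Proof. by apply/eqP/eqP => [[]|->]. Qed.
Lemma sum_eqE2 (A B : eqType) (x y : B) : ((inr x : A + B) == inr y) = (x == y).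
Proof. by apply/eqP/eqP => [[]|->]. Qed.
Lemma sum_eqE3 (A B : eqType) (x : A) (y : B) : ((inl x : A + B) == inr y) = false.
Proof. by apply/eqP. Qed.
Lemma sum_eqE4 (A B : eqType) (x : A) (y : B) : ((inr y : A + B) == inl x) = false.
Proof. by apply/eqP. Qed.
Definition sum_eqE := (sum_eqE1, sum_eqE2, sum_eqE3, sum_eqE4).

Lemma card4 (T : finType) (A : {set T}) x1 x2 x3 x4 : uniq [:: x1; x2; x3; x4] ->
  x1 \in A -> x2 \in A -> x3 \in A -> x4 \in A -> 3 < #|A|.
Proof.
move=> Hu4 H1 H2 H3 H4.
have := subset_leq_card (A := [pred x | x \in [:: x1; x2; x3; x4]]) (B := A).
rewrite (card_uniqP Hu4) /=; apply; apply/subsetP => x; rewrite !inE.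
by case/or4P => /eqP ->.
Qed.

Lemma triv_mem (Y : {set V}) x : ~~ ntr Y -> (x \in Y) = (Y == setT).
Proof.
rewrite /ntr negb_and !negbK => /orP [] /eqP ->; rewrite ?inE ?eqxx //.
apply/esym/negP => /eqP /(congr1 (fun S : {set V} => x \in S)); by rewrite !inE.
Qed.

Lemma Q1 Z i k0 : ntr (sl Z i) -> (inr (k0, false) : HE) \in cutH Z ->
  (inr (k0, true) : HE) \in cutH Z -> 3 < #|cutH Z|.
Proof.
case/andP => H0 HT HF HT'.
have [x [y [Hxy Hx Hy]]] := F1 H0 HT.
apply: (card4 (x1 := inl (x, i)) (x2 := inl (y, i)) (x3 := inr (k0, false)) (x4 := inr (k0, true))) => //;
  rewrite ?crossL //.
by rewrite /= !inE !sum_eqE !xpair_eqE !eqxx !andbT !orbF (negbTE Hxy).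
Qed.

Lemma M1 Z i j : i != j -> ntr (sl Z i) -> ntr (sl Z j) -> 3 < #|cutH Z|.
Proof.
move=> Hij /andP [Hi0 HiT] /andP [Hj0 HjT].
have [x [y [Hxy Hx Hy]]] := F1 Hi0 HiT.
have [x' [y' [Hxy' Hx' Hy']]] := F1 Hj0 HjT.
apply: (card4 (x1 := inl (x, i)) (x2 := inl (y, i)) (x3 := inl (x', j)) (x4 := inl (y', j))) => //;
  rewrite ?crossL //.
by rewrite /= !inE !sum_eqE !xpair_eqE !(eq_sym j) (negbTE Hij) !andbF !eqxx !andbT !orbF (negbTE Hxy) (negbTE Hxy').
Qed.

Definition fsl Z k := sl Z k == setT.

Lemma Q2 Z k : ~~ ntr (sl Z k) -> ~~ ntr (sl Z (ordS k)) -> fsl Z k != fsl Z (ordS k) ->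
  ((inr (k, false) : HE) \in cutH Z) && ((inr (k, true) : HE) \in cutH Z).
Proof.
move=> H1 H2 H3; rewrite crossF crossT !(triv_mem _ H1) !(triv_mem _ H2).
by move: H3; rewrite /fsl => ->.
Qed.

Lemma Mall Z : (forall i, ~~ ntr (sl Z i)) -> Z != set0 -> ~: Z != set0 -> 3 < #|cutH Z|.
Proof.
move=> Htr /set0Pn [[x i] Hx] /set0Pn [[y j] Hy].
have Hfi : fsl Z i by rewrite /fsl -(triv_mem x (Htr i)) inE.
have Hfj : ~~ fsl Z j by rewrite /fsl -(triv_mem y (Htr j)) inE; rewrite inE in Hy.
have Hex : forall k0, exists2 k, k != k0 & fsl Z k != fsl Z (ordS k).
  move=> k0; case: (pickP (fun k => (k != k0) && (fsl Z k != fsl Z (ordS k)))) => [k /andP [H1 H2]|H].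
    by exists k.
  exfalso; have Hc := @cycB t (fsl Z) k0.
  have : fsl Z i = fsl Z j.
    rewrite (Hc _ i) ?(Hc _ j) // => k Hk; have := H k; rewrite Hk /=; by move/negbT; rewrite negbK => /eqP.
  by rewrite Hfi (negbTE Hfj).
have [k0 _ Hk0] := Hex i.
have [k1 Hk1 Hk1'] := Hex k0.
have /andP [A1 A2] := Q2 (Htr _) (Htr _) Hk0.
have /andP [B1 B2] := Q2 (Htr _) (Htr _) Hk1'.
apply: (card4 (x1 := inr (k0, false)) (x2 := inr (k0, true)) (x3 := inr (k1, false)) (x4 := inr (k1, true))) => //.
by rewrite /= !inE !sum_eqE !xpair_eqE !(eq_sym k0) (negbTE Hk1) !andbF.
Qed.

Definition phi Z i (e : E) : HE :=
  match (insub e : option subE) with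
  | Some s => inl (s, i)
  | None => if e == e1 then (if a \in sl Z i then inr (ord_pred i, false) else inr (ord_pred i, true))
            else (if d \in sl Z i then inr (i, false) else inr (i, true))
  end.

Definition psi i (x : HE) : E :=
  match x with
  | inl (s, _) => val s
  | inr (j, _) => if j == i then e2 else e1
  end.

Lemma predi_neq (i : 'I_t) : ord_pred i != i.
Proof.
apply/negP => /eqP H; have := ordS_neq (ord_pred i) Ht.
by rewrite ord_predK H eqxx.
Qed.

Lemma phiK Z i : cancel (phi Z i) (psi i).
Proof.
move=> e; rewrite /phi; case: insubP => [s _ <- //|].
rewrite negb_and !negbK => Hn.
case: (e =P e1) => [->|He].
  by case: (a \in sl Z i); rewrite /= (negbTE (predi_neq i)).
by case: (d \in sl Z i); rewrite /= eqxx; case/orP: Hn => /eqP.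
Qed.

Lemma e1cut (Y : {set V}) : (e1 \in cutG src tgt Y) = ((a \in Y) != (b \in Y)).
Proof. by rewrite inE; case: He1 => [[-> ->]|[-> ->]] //; rewrite eq_sym. Qed.
Lemma e2cut (Y : {set V}) : (e2 \in cutG src tgt Y) = ((c \in Y) != (d \in Y)).
Proof. by rewrite inE; case: He2 => [[-> ->]|[-> ->]] //; rewrite eq_sym. Qed.

Lemma N Z i : ntr (sl Z i) -> (forall j, j != i -> sl Z j = set0) ->
  #|cutH Z| <= 3 -> 1 < #|Z| -> False.
Proof.
move=> Hntr Hoth Hc HZ.
set k := ord_pred i.
have Hk : ordS k = i by rewrite ord_predK.
have Hslk : sl Z k = set0 by apply: Hoth; apply: predi_neq.
have Hsli : sl Z (ordS i) = set0 by apply: Hoth; apply: ordS_neq.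
have Hphi : forall e, e \in cutG src tgt (sl Z i) -> phi Z i e \in cutH Z.
  move=> e He; rewrite /phi; case: insubP => [s _ Hs|].
    by rewrite crossL Hs.
  rewrite negb_and !negbK => Hn.
  case: (e =P e1) => [Hee|Hee].
    rewrite Hee e1cut in He *.
    case: (boolP (a \in sl Z i)) => Ha; rewrite ?crossF ?crossT -/k Hk Hslk inE.
      by rewrite Ha.
    by move: He; rewrite (negbTE Ha); case: (b \in _).
  have He2' : e = e2 by case/orP: Hn => /eqP.
  rewrite He2' e2cut in He *.
  case: (boolP (d \in sl Z i)) => Hd; rewrite ?crossF ?crossT Hsli inE.
    by rewrite inE in Hd; rewrite Hd inE.
  by move: He; rewrite (negbTE Hd) !inE; case: ((c, i) \in Z).
have Hcut : #|cutG src tgt (sl Z i)| <= 3.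
  rewrite -(card_imset _ (can_inj (phiK Z i))).
  apply: leq_trans Hc; apply: subset_leq_card; apply/subsetP => x /imsetP [e He ->].
  exact: Hphi.
case: (L3 Hloop Hcub Hcyc Hcut) => Hs.
  have : Z \subset [set (x, i) | x in sl Z i].
    apply/subsetP => [[x j]] Hxj; apply/imsetP; exists x => //.
      case: (j =P i) => [<-|Hji]; first by rewrite inE.
      by have := Hoth j (introN eqP Hji); move/setP/(_ x); rewrite !inE Hxj.
    case: (j =P i) => [-> //|Hji].
    by have := Hoth j (introN eqP Hji); move/setP/(_ x); rewrite !inE Hxj.
  move/subset_leq_card => H1; have := leq_trans H1 (leq_imset_card _ _); lia.
set Y := sl Z i in Hntr Hs Hphi Hcut.
have Hp : ((a \in Y) && (b \in Y)) || ((c \in Y) && (d \in Y)).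
  apply/negPn/negP => Hn.
  suff : 1 < #|~: Y| by lia.
  apply/card_gt1P.
  move: Hn; rewrite negb_or !negb_and => /andP [Hab' Hcd'].
  have Hne : forall x y, x \notin Y -> y \notin Y -> x != y -> 1 < #|~: Y|.
    by move=> x y Hx Hy Hxy; apply/card_gt1P; exists x, y; split => //; rewrite in_setC.
  case/orP: Hab' => Hx; case/orP: Hcd' => Hy.
  - by have /card_gt1P := Hne _ _ Hx Hy Hac.
  - by have /card_gt1P := Hne _ _ Hx Hy Had.
  - by have /card_gt1P := Hne _ _ Hx Hy Hbc.
  - by have /card_gt1P := Hne _ _ Hx Hy Hbd.
case/orP: Hp => /andP [H1 H2].
  have := Q1 (k0 := k) Hntr; rewrite !crossF !crossT Hk Hslk !in_set0 -/Y H1 H2 => /(_ isT isT); lia.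
have := Q1 (k0 := i) Hntr; rewrite !crossF !crossT Hsli !in_set0 -/Y H1 H2 => /(_ isT isT); lia.
Qed.

Lemma Mmain Z : #|cutH Z| <= 3 -> 1 < #|Z| -> 1 < #|~: Z| -> False.
Proof.
move=> Hc HZ HZ'.
case: (pickP (fun i => ntr (sl Z i))) => [i Hi | Hnone]; last first.
  have := Mall (Z := Z) (fun i => negbT (Hnone i)).
  rewrite -!card_gt0 => H; have := H ltac:(lia) ltac:(lia); lia.
case: (pickP (fun j => (j != i) && ntr (sl Z j))) => [j /andP [Hj1 Hj2] | Hone].
  by have := M1 Hj1 Hj2 Hi; lia.
have Htr : forall j, j != i -> ~~ ntr (sl Z j).
  by move=> j Hj; have := Hone j; rewrite Hj /= => ->.
case: (pickP (fun k => [&& k != i, ordS k != i & fsl Z k != fsl Z (ordS k)])) => [k /and3P [K1 K2 K3] | Hsame].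
  have /andP [A1 A2] := Q2 (Htr _ K1) (Htr _ K2) K3.
  by have := Q1 Hi A1 A2; lia.
have Heq : forall j, j != i -> fsl Z j = fsl Z (ordS i).
  apply: cycB' => // k K1 K2; have := Hsame k; rewrite K1 K2 /=.
  by move/negbT; rewrite negbK => /eqP.
have Hslj : forall j, j != i -> sl Z j = if fsl Z (ordS i) then setT else set0.
  move=> j Hj; have := Htr j Hj; rewrite /ntr negb_and !negbK -(Heq j Hj) /fsl.
  by case/orP => /eqP ->; rewrite ?eqxx //; case: ifP => // /eqP.
case: (boolP (fsl Z (ordS i))) => Hb.
  apply: (N (Z := ~: Z) (i := i)).
  - by rewrite slC; move: Hi; rewrite /ntr => /andP [H1 H2]; rewrite setC_neq0 //=;
      apply/negP => /eqP H; move: H1; rewrite -[sl Z i]setCK H; apply/negP; rewrite negbK;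
      apply/eqP/setP => x; rewrite !inE.
  - by move=> j Hj; rewrite slC Hslj // Hb; apply/setP => x; rewrite !inE.
  - by rewrite cutHC.
  - by [].
apply: (N (Z := Z) (i := i)) => // j Hj; by rewrite Hslj // (negbTE Hb).
Qed.

Lemma Hloopless : loopless JS JT.
Proof.
case => [[s i]|[i []]]; rewrite /JS /JT /join_src /join_tgt /= xpair_eqE negb_and.
- by rewrite Hloop.
- by rewrite eq_sym Hbc.
- by rewrite eq_sym Had.
Qed.

End HPart.


Theorem mainTheorem4 (V E : finType) (src tgt : E -> V) (e1 e2 : E)
    (a b c d : V) (t : nat) :
  loopless src tgt -> cubic src tgt -> cyc4ec src tgt ->
  ((src e1 = a /\ tgt e1 = b) \/ (src e1 = b /\ tgt e1 = a)) ->
  ((src e2 = c /\ tgt e2 = d) \/ (src e2 = d /\ tgt e2 = c)) ->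
  uniq [:: a; b; c; d] ->
  2 <= t ->
  cyc4ec (@join_src V E src tgt e1 e2 a b c d t)
         (@join_tgt V E src tgt e1 e2 a b c d t).
Proof.
move=> Hloop Hcub Hcyc He1 He2 Hu Ht S HS [u [v [Hnc Hcu Hcv]]].
set A := adj_minus (@join_src V E src tgt e1 e2 a b c d t) (@join_tgt V E src tgt e1 e2 a b c d t) S.
set X := [set w | connect A u w].
have Hce := @conn_edge _ _ (@join_src V E src tgt e1 e2 a b c d t) (@join_tgt V E src tgt e1 e2 a b c d t) S.
have HL := Hloopless (e1 := e1) (e2 := e2) (t := t) Hloop Hu.
have Hsub : cutH src tgt e1 e2 a b c d X \subset S.
  apply/subsetP => x; rewrite !inE; apply: contraR => Hx.
  by rewrite /JS /JT (Hce x u Hx).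
apply: (Mmain Hloop Hcub Hcyc He1 He2 Hu Ht (Z := X)).
- by apply: leq_trans (subset_leq_card Hsub) _; move: HS; rewrite ltnS.
- case: Hcu => F [HF0 Hdis Hcon _]; have /set0Pn [e He] := HF0.
  have HeS : e \notin S by rewrite (disjointFr Hdis He).
  apply/card_gt1P; exists (join_src src tgt a b c d e), (join_tgt src tgt a b c d e).
  rewrite !inE; split; [exact: Hcon | rewrite -(Hce e u HeS); exact: Hcon | exact: HL].
- case: Hcv => F [HF0 Hdis Hcon _]; have /set0Pn [e He] := HF0.
  have HeS : e \notin S by rewrite (disjointFr Hdis He).
  have Hv1 := Hcon e He; have Hv2 := Hv1; rewrite (Hce e v HeS) in Hv2.
  have Hns : forall w, connect A v w -> w \notin X.
    move=> w Hw; rewrite inE; apply/negP => Huw; move/negP: Hnc; apply.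
    apply: connect_trans Huw _; rewrite (sym_connect_sym (adj_sym _ _ S)); exact: Hw.
  apply/card_gt1P; exists (join_src src tgt a b c d e), (join_tgt src tgt a b c d e).
  by rewrite !in_setC !Hns //; split => //; exact: HL.
Qed.
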